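(* Every instance of the axiom schema (K1) $\Box(\alpha\to\beta)\to(\Diamond\alpha\to\Diamond\beta)$ is derivable in ${\bf Tmd}$.
   Context: Formulas are built from a denumerable set of propositional variables by the unary connectives $\neg$, $\Box$ and the binary connective $\to$; $For$ is the set of all formulas; $\Diamond\alpha:=\neg\Box\neg\alpha$. ${\bf Tmd}$ is the Hilbert calculus whose axioms are all instances (over $For$) of the axiom schemas of a standard Hilbert calculus for classical propositional logic in the signature $\{\neg,\to\}$, plus all instances of: (K) $\Box(\alpha\to\beta)\to(\Box\alpha\to\Box\beta)$; (Kdet) $\Box(\alpha\to\beta)\to(\Diamond\alpha\to\Box\beta)$; (K2) $\Diamond(\alpha\to\beta)\to(\Box\alpha\to\Diamond\beta)$; (M1) $\neg\Diamond\alpha\to\Box(\alpha\to\beta)$; (M2) $\Box\beta\to\Box(\alpha\to\beta)$; (M3) $\Diamond\beta\to\Diamond(\alpha\to\beta)$; (M4) $\Diamond\neg\alpha\to\Diamond(\alpha\to\beta)$; (T) $\Box\alpha\to\alpha$; (DN1) $\Box\alpha\to\Box\neg\neg\alpha$; (DN2) $\Box\neg\neg\alpha\to\Box\alpha$; modus ponens is the only inference rule. *)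

(* Defs.v *)
From Stdlib Require Import Arith.

Inductive form : Type :=
| Var : nat -> form
| Neg : form -> form
| Box : form -> form
| Imp : form -> form -> form.

Definition Dia (a : form) : form := Neg (Box (Neg a)).

(* Axioms of Tmd.  Classical propositional part: the standard
   Lukasiewicz axiomatization in the signature {~, ->}. *)
Inductive TmdAxiom : form -> Prop :=
| Ax_CPL1 : forall a b, TmdAxiom (Imp a (Imp b a))
| Ax_CPL2 : forall a b c,
    TmdAxiom (Imp (Imp a (Imp b c)) (Imp (Imp a b) (Imp a c)))
| Ax_CPL3 : forall a b,
    TmdAxiom (Imp (Imp (Neg a) (Neg b)) (Imp b a))
| Ax_K : forall a b,
    TmdAxiom (Imp (Box (Imp a b)) (Imp (Box a) (Box b)))
| Ax_Kdet : forall a b,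
    TmdAxiom (Imp (Box (Imp a b)) (Imp (Dia a) (Box b)))
| Ax_K2 : forall a b,
    TmdAxiom (Imp (Dia (Imp a b)) (Imp (Box a) (Dia b)))
| Ax_M1 : forall a b,
    TmdAxiom (Imp (Neg (Dia a)) (Box (Imp a b)))
| Ax_M2 : forall a b,
    TmdAxiom (Imp (Box b) (Box (Imp a b)))
| Ax_M3 : forall a b,
    TmdAxiom (Imp (Dia b) (Dia (Imp a b)))
| Ax_M4 : forall a b,
    TmdAxiom (Imp (Dia (Neg a)) (Dia (Imp a b)))
| Ax_T : forall a,
    TmdAxiom (Imp (Box a) a)
| Ax_DN1 : forall a,
    TmdAxiom (Imp (Box a) (Box (Neg (Neg a))))
| Ax_DN2 : forall a,
    TmdAxiom (Imp (Box (Neg (Neg a))) (Box a)).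

Inductive Tmd_derivable : form -> Prop :=
| D_ax : forall a, TmdAxiom a -> Tmd_derivable a
| D_mp : forall a b, Tmd_derivable (Imp a b) -> Tmd_derivable a -> Tmd_derivable b.

(* Main.v *)
Require Import Defs.
From Stdlib Require Import List.

Inductive Der (G : list form) : form -> Prop :=
| Dax : forall a, TmdAxiom a -> Der G a
| Dhyp : forall a, In a G -> Der G a
| Dmp : forall a b, Der G (Imp a b) -> Der G a -> Der G b.

Lemma Dimp_refl G a : Der G (Imp a a).
Proof.
  eapply Dmp. eapply Dmp. apply Dax. apply (Ax_CPL2 a (Imp a a) a).
  apply Dax, Ax_CPL1. apply Dax, Ax_CPL1.
Qed.

Lemma deduction G a b : Der (a :: G) b -> Der G (Imp a b).
Proof.
  induction 1 as [c Hc|c Hc|c d _ IH1 _ IH2].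
  - eapply Dmp. apply Dax, Ax_CPL1. apply Dax, Hc.
  - destruct Hc as [<-|Hc]. apply Dimp_refl.
    eapply Dmp. apply Dax, Ax_CPL1. apply Dhyp, Hc.
  - eapply Dmp. eapply Dmp. apply Dax, Ax_CPL2. exact IH1. exact IH2.
Qed.

Lemma Der_nil a : Der nil a -> Tmd_derivable a.
Proof.
  remember nil as G. induction 1.
  - apply D_ax; auto.
  - subst; destruct H.
  - eapply D_mp; eauto.
Qed.

Lemma weak G G' a : Der G a -> incl G G' -> Der G' a.
Proof.
  induction 1; intros; [apply Dax|apply Dhyp|eapply Dmp]; eauto.
Qed.

Lemma dne G p : Der G (Imp (Neg (Neg p)) p).
Proof.
  apply deduction.
  eapply Dmp; [|apply Dhyp; left; reflexivity].
  eapply Dmp. apply Dax, (Ax_CPL3 p (Neg (Neg p))).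
  eapply Dmp. apply Dax, (Ax_CPL3 (Neg (Neg (Neg p))) (Neg p)).
  eapply Dmp. apply Dax, Ax_CPL1. apply Dhyp; left; reflexivity.
Qed.

Theorem mainTheorem12 : forall a b : form,
  Tmd_derivable (Imp (Box (Imp a b)) (Imp (Dia a) (Dia b))).
Proof.
  intros a b. apply Der_nil. apply deduction, deduction.
  set (G := Dia a :: Box (Imp a b) :: nil).
  assert (Hb : Der G b).
  { eapply Dmp. apply Dax, Ax_T.
    eapply Dmp. eapply Dmp. apply Dax, Ax_Kdet.
    apply Dhyp; simpl; auto. apply Dhyp; simpl; auto. }
  change (Der G (Neg (Box (Neg b)))).
  set (p := Box (Neg b)).
  assert (H : Der G (Imp (Neg (Neg p)) (Neg b))).
  { apply deduction. eapply Dmp. apply Dax, Ax_T.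
    eapply Dmp. apply dne. apply Dhyp; left; reflexivity. }
  eapply Dmp. eapply Dmp. apply Dax, (Ax_CPL3 (Neg p) b). exact H. exact Hb.
Qed.
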